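(* Let $q\in\mathbb{C}$ with $0<|q|<1$. Then: (i) for every integer $n\geq 1$, \[ \sum_{m=1}^{2n}(-1)^m q^{\frac{m(m-1)}{2}-mn} \;=\; 0; \] (ii) for every integer $n$ and every integer $r\geq 0$, \[ \sum_{m=1}^{\infty}\sum_{s=-r}^{r}(-1)^m q^{\frac{m(m-1)}{2}-m(n+s)}(1-q^m) \;=\; \sum_{m=1}^{\infty}\sum_{s=-r}^{r}(-1)^m q^{\frac{m(m-1)}{2}-m(-n+s)}(1-q^m). \]
   Context: In (ii) the inner sum runs over all integers $s$ with $-r\le s\le r$. *)

(* Defs.v *)
From Stdlib Require Import Reals ZArith.
From Coquelicot Require Import Coquelicot.
Open Scope R_scope.

Definition zpow (q : C) (z : Z) : C :=
  match z with
  | Z0 => 1%C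
  | Zpos p => pow_n q (Pos.to_nat p)
  | Zneg p => Cinv (pow_n q (Pos.to_nat p))
  end.

(* exponent m(m-1)/2 - m*k (m(m-1) is even, so the division is exact) *)
Definition expo (m : nat) (k : Z) : Z :=
  ((Z.of_nat m * (Z.of_nat m - 1)) / 2 - Z.of_nat m * k)%Z.

Definition term1 (q : C) (k : Z) (m : nat) : C :=
  Cmult (pow_n (Copp 1%C) m) (zpow q (expo m k)).

Definition inner (q : C) (n : Z) (r : nat) (m : nat) : C :=
  sum_n_m (G := C_AbelianMonoid)
    (fun k : nat =>
       Cmult (term1 q (n + (Z.of_nat k - Z.of_nat r))%Z m)
             (Cminus 1%C (pow_n q m)))
    0 (2 * r).

(* Main.v *)
Require Import Defs.
From Stdlib Require Import Reals ZArith Lia Lra Psatz.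
From Coquelicot Require Import Coquelicot.
Open Scope R_scope.

Lemma half (m : nat) : (2 * (Z.of_nat m * (Z.of_nat m - 1) / 2) = Z.of_nat m * (Z.of_nat m - 1))%Z.
Proof.
  destruct (Z.Even_or_Odd (Z.of_nat m)) as [[y Hy]|[y Hy]]; rewrite Hy.
  - replace (2*y*(2*y-1))%Z with ((y*(2*y-1))*2)%Z by ring.
    rewrite Z.div_mul by lia. ring.
  - replace ((2*y+1)*(2*y+1-1))%Z with ((y*(2*y+1))*2)%Z by ring.
    rewrite Z.div_mul by lia. ring.
Qed.

Lemma E1 (n m : nat) : (m <= 2*n+1)%nat ->
  expo (2*n+1-m) (Z.of_nat n) = expo m (Z.of_nat n).
Proof.
  intros H. unfold expo. pose proof (half m). pose proof (half (2*n+1-m)).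
  rewrite Nat2Z.inj_sub in * by lia. rewrite Nat2Z.inj_add, Nat2Z.inj_mul in *.
  set (t1 := ((2 * Z.of_nat n + 1 - Z.of_nat m) * (2 * Z.of_nat n + 1 - Z.of_nat m - 1) / 2)%Z) in *.
  set (t2 := (Z.of_nat m * (Z.of_nat m - 1) / 2)%Z) in *.
  simpl Z.of_nat in *. nia.
Qed.

Lemma E2 (k j : nat) :
  expo (2*k+1+j) (Z.of_nat k) = expo j (- Z.of_nat k - 1)%Z.
Proof.
  unfold expo. pose proof (half j). pose proof (half (2*k+1+j)).
  rewrite !Nat2Z.inj_add, Nat2Z.inj_mul in *.
  set (t1 := ((2 * Z.of_nat k + Z.of_nat 1 + Z.of_nat j) * (2 * Z.of_nat k + Z.of_nat 1 + Z.of_nat j - 1) / 2)%Z) in *.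
  set (t2 := (Z.of_nat j * (Z.of_nat j - 1) / 2)%Z) in *.
  simpl Z.of_nat in *. nia.
Qed.

Lemma E3 (m : nat) (k : Z) : expo m (k - 1) = (expo m k + Z.of_nat m)%Z.
Proof. unfold expo. ring. Qed.

Lemma E4 (k : Z) (j : nat) :
  (Z.of_nat j <= expo (S (Z.to_nat (2 * Z.abs k) + 2 + j)) k)%Z.
Proof.
  unfold expo. set (m := S (Z.to_nat (2 * Z.abs k) + 2 + j)).
  pose proof (half m).
  assert (Hm : (Z.of_nat m = 2 * Z.abs k + 3 + Z.of_nat j)%Z).
  { unfold m. rewrite Nat2Z.inj_succ, !Nat2Z.inj_add, Z2Nat.id by lia. simpl. lia. }
  set (t := (Z.of_nat m * (Z.of_nat m - 1) / 2)%Z) in *.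
  rewrite Hm in *.
  assert (Z.abs k * (2 * Z.abs k + 3 + Z.of_nat j) >= (2 * Z.abs k + 3 + Z.of_nat j) * k)%Z.
  { destruct (Z.abs_spec k) as [[? ->]|[? ->]]; nia. }
  nia.
Qed.

Lemma pow_n_Cpow (x : C) n : pow_n (K:=C_Ring) x n = Cpow x n.
Proof. induction n; [reflexivity|]. simpl. rewrite IHn. reflexivity. Qed.

Lemma sg_even k : Cpow (Copp (RtoC 1)) (2*k) = RtoC 1.
Proof.
  induction k. reflexivity.
  replace (2 * S k)%nat with (S (S (2*k))) by lia.
  rewrite !Cpow_S, IHk. ring.
Qed.

Lemma sg_flip a b k : (a + b = S (2*k))%nat ->
  Cpow (Copp (RtoC 1)) a = Copp (Cpow (Copp (RtoC 1)) b).
Proof.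
  intros H.
  assert (H1 : Cmult (Cpow (Copp (RtoC 1)) a) (Cpow (Copp (RtoC 1)) b) = Copp (RtoC 1)).
  { rewrite <- Cpow_add_r, H, Cpow_S, sg_even. ring. }
  assert (H2 : Cmult (Cpow (Copp (RtoC 1)) b) (Cpow (Copp (RtoC 1)) b) = RtoC 1).
  { rewrite <- Cpow_add_r. replace (b+b)%nat with (2*b)%nat by lia. apply sg_even. }
  set (x := Cpow (Copp (RtoC 1)) a) in *.
  set (y := Cpow (Copp (RtoC 1)) b) in *.
  transitivity (Cmult x (Cmult y y)). rewrite H2. ring.
  transitivity (Cmult (Cmult x y) y). ring. rewrite H1. ring.
Qed.

Lemma zpow_nonneg q z : (0 <= z)%Z -> zpow q z = Cpow q (Z.to_nat z).
Proof. destruct z; intros; try lia; simpl; try rewrite pow_n_Cpow; reflexivity. Qed.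

Lemma zpow_neg q z : (z < 0)%Z -> zpow q z = Cinv (Cpow q (Z.to_nat (- z))).
Proof. destruct z; intros; try lia. simpl. rewrite pow_n_Cpow; reflexivity. Qed.

Lemma zpow_succ q z : q <> RtoC 0 -> zpow q (z + 1) = Cmult (zpow q z) q.
Proof.
  intros Hq. destruct (Z_lt_le_dec z 0) as [Hz|Hz].
  - destruct (Z.eq_dec z (-1)) as [->|Hz1].
    + replace (-1+1)%Z with 0%Z by ring. rewrite (zpow_neg q (-1)) by lia. simpl. field. auto.
    + rewrite !zpow_neg by lia.
      replace (Z.to_nat (- z)) with (S (Z.to_nat (- (z+1)))) by lia.
      rewrite Cpow_S. field. split; auto. apply Cpow_nz; auto.
  - rewrite !zpow_nonneg by lia. replace (Z.to_nat (z+1)) with (S (Z.to_nat z)) by lia.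
    rewrite Cpow_S. ring.
Qed.

Lemma zpow_addn q z m : q <> RtoC 0 ->
  zpow q (z + Z.of_nat m) = Cmult (zpow q z) (Cpow q m).
Proof.
  intros Hq. induction m.
  - simpl. rewrite Z.add_0_r. ring.
  - rewrite Nat2Z.inj_succ, <- Z.add_1_r, Z.add_assoc, zpow_succ, IHm by auto.
    rewrite (Cpow_S q m). ring.
Qed.

Lemma term1E q k m : term1 q k m = Cmult (Cpow (Copp (RtoC 1)) m) (zpow q (expo m k)).
Proof. unfold term1. rewrite pow_n_Cpow. reflexivity. Qed.

Lemma term1_pred q k m : q <> RtoC 0 ->
  term1 q (k - 1) m = Cmult (term1 q k m) (Cpow q m).
Proof.
  intros Hq. rewrite !term1E, E3, zpow_addn by auto. ring.
Qed.

Lemma term1_0 q k : term1 q k 0 = RtoC 1.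
Proof. rewrite term1E. unfold expo. simpl. ring. Qed.

Lemma vanish (g : nat -> C) n :
  (forall m, (1 <= m <= 2*n)%nat -> g (2*n+1-m)%nat = Copp (g m)) ->
  sum_n_m (G := C_AbelianMonoid) g 1 (2*n) = RtoC 0.
Proof.
  intros Hg.
  assert (K : forall k, (k <= n)%nat -> sum_n_m (G := C_AbelianMonoid) g (n+1-k) (n+k) = RtoC 0).
  { induction k; intros Hk.
    - rewrite sum_n_m_zero by lia. reflexivity.
    - rewrite sum_Sn_m by lia.
      replace (S (n + 1 - S k)) with (n+1-k)%nat by lia.
      replace (n + S k)%nat with (S (n+k)) by lia.
      rewrite sum_n_Sm by lia. rewrite IHk by lia.
      replace (S (n+k)) with (2*n+1-(n+1-S k))%nat by lia.
      rewrite Hg by lia. change (Cplus (g (n+1-S k)%nat) (Cplus (RtoC 0) (Copp (g (n+1-S k)%nat))) = RtoC 0).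
      ring. }
  specialize (K n (le_n n)). replace (n+1-n)%nat with 1%nat in K by lia.
  replace (n+n)%nat with (2*n)%nat in K by lia. exact K.
Qed.

Lemma part1 q n : (1 <= n)%nat -> q <> RtoC 0 ->
  sum_n_m (G := C_AbelianMonoid) (term1 q (Z.of_nat n)) 1 (2 * n) = RtoC 0.
Proof.
  intros _ Hq. apply vanish. intros m Hm.
  rewrite !term1E, E1 by lia.
  rewrite (sg_flip (2*n+1-m) m n) by lia. ring.
Qed.

Lemma part1' q n : q <> RtoC 0 ->
  sum_n_m (G := C_AbelianMonoid) (term1 q (Z.of_nat n)) 1 (2 * n) = RtoC 0.
Proof.
  intros Hq. destruct n. rewrite sum_n_m_zero by lia. reflexivity. apply part1; auto. lia.
Qed.

Lemma telesc (c : nat -> C) N :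
  sum_n_m (G := C_AbelianMonoid) (fun i => Cminus (c (S i)) (c i)) 0 N = Cminus (c (S N)) (c 0%nat).
Proof.
  induction N.
  - rewrite sum_n_n. reflexivity.
  - rewrite sum_n_Sm by lia. rewrite IHN. change (Cplus (Cminus (c (S N)) (c 0%nat)) (Cminus (c (S (S N))) (c (S N))) = Cminus (c (S (S N))) (c 0%nat)). ring.
Qed.

Lemma innerE q n r m : q <> RtoC 0 ->
  inner q n r m = Cminus (term1 q (n + Z.of_nat r) m) (term1 q (n - Z.of_nat r - 1) m).
Proof.
  intros Hq. unfold inner.
  rewrite (sum_n_m_ext_loc _ (fun i => Cminus ((fun i => term1 q (n - Z.of_nat r - 1 + Z.of_nat i) m) (S i)) ((fun i => term1 q (n - Z.of_nat r - 1 + Z.of_nat i) m) i))).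
  - rewrite (telesc (fun i => term1 q (n - Z.of_nat r - 1 + Z.of_nat i) m)). f_equal; f_equal; lia.
  - intros k _. cbv beta.
    replace (n - Z.of_nat r - 1 + Z.of_nat k)%Z with ((n + (Z.of_nat k - Z.of_nat r)) - 1)%Z by lia.
    rewrite term1_pred by auto. rewrite pow_n_Cpow.
    replace (n - Z.of_nat r - 1 + Z.of_nat (S k))%Z with (n + (Z.of_nat k - Z.of_nat r))%Z by lia.
    match goal with |- ?a = ?b => change (@eq C a b) end; ring.
Qed.

Ltac ceq := match goal with |- ?a = ?b => change (@eq C a b) end;
  repeat match goal with
  | |- context [@plus ?G ?x ?y] => change (@plus G x y) with (Cplus x y)
  | |- context [@opp ?G ?x] => change (@opp G x) with (Copp x)
  | |- context [@zero ?G] => change (@zero G) with (RtoC 0)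
  end; ring.

Lemma powdec (x : R) a b : 0 <= x <= 1 -> (a <= b)%nat -> x ^ b <= x ^ a.
Proof.
  intros Hx Hab. replace b with (a + (b - a))%nat by lia. rewrite pow_add.
  assert (0 <= x ^ a) by (apply pow_le; lra).
  assert (x ^ (b - a) <= 1).
  { induction (b - a)%nat. simpl; lra. simpl. nra. }
  nra.
Qed.

Lemma L1 q k : Cmod q < 1 -> ex_series (V := C_NormedModule) (fun j => term1 q k (S j)).
Proof.
  intros Hq.
  apply (ex_series_incr_n _ (Z.to_nat (2*Z.abs k) + 2)).
  refine (ex_series_le (V := C_CompleteNormedModule) _ (fun j => Cmod q ^ j) _ _).
  - intros j. change (Cmod (term1 q k (S (Z.to_nat (2 * Z.abs k) + 2 + j))) <= Cmod q ^ j). rewrite term1E, Cmod_mult, Cmod_pow, Cmod_opp, Cmod_1, pow1.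
    pose proof (E4 k j) as H4.
    replace (S (Z.to_nat (2 * Z.abs k) + 2 + j)) with (S (Z.to_nat (2 * Z.abs k) + 2 + j)) by reflexivity.
    rewrite zpow_nonneg by lia. rewrite Cmod_pow. rewrite Rmult_1_l.
    apply powdec. pose proof (Cmod_ge_0 q); lra. lia.
  - apply ex_series_geom. rewrite Rabs_pos_eq. auto. apply Cmod_ge_0.
Qed.

Lemma is_series_Copp (f : nat -> C) (l : C) : is_series (V:=C_NormedModule) f l -> is_series (V:=C_NormedModule) (fun n => Copp (f n)) (Copp l).
Proof. intros H. exact (is_series_opp _ _ H). Qed.

Lemma L2nat q (k : nat) (L : C) : q <> RtoC 0 ->
  is_series (V := C_NormedModule) (fun j => term1 q (Z.of_nat k) (S j)) L ->
  is_series (V := C_NormedModule) (fun j => term1 q (- Z.of_nat k - 1) (S j)) (Copp (Cplus (RtoC 1) L)).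
Proof.
  intros Hq H.
  set (a := term1 q (Z.of_nat k)) in *.
  assert (Ha : is_series (V := C_NormedModule) a (Cplus L (RtoC 1))).
  { apply is_series_decr_1.
    match goal with |- is_series _ ?l => replace l with L end. exact H.
    unfold a; rewrite term1_0. ceq. }
  assert (Ht : is_series (V := C_NormedModule) (fun j => a (S (2*k) + j)%nat) L).
  { apply is_series_incr_n. lia.
    match goal with |- is_series _ ?l => replace l with (Cplus L (RtoC 1)) end. exact Ha.
    simpl Init.Nat.pred. unfold sum_n. rewrite sum_Sn_m by lia.
    unfold a. rewrite term1_0, part1' by auto. ceq. }
  assert (Ht2 : is_series (V := C_NormedModule) (fun j => Copp (Copp (term1 q (- Z.of_nat k - 1) j))) (Copp L)).
  { apply is_series_Copp. revert Ht. apply is_series_ext. intros j. unfold a.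
    replace (S (2*k) + j)%nat with (2*k+1+j)%nat by lia.
    rewrite !term1E, E2, !Cpow_add_r.
    rewrite sg_even, Cpow_1_r. ceq. }
  assert (Ht3 : is_series (V := C_NormedModule) (term1 q (- Z.of_nat k - 1)) (Copp L)).
  { revert Ht2. apply is_series_ext. intros j. ceq. }
  apply is_series_incr_1.
  match goal with |- is_series _ ?l => replace l with (Copp L) end. exact Ht3.
  rewrite term1_0. ceq.
Qed.

Lemma ser_unique (f : nat -> C) (l1 l2 : C) :
  is_series (V:=C_NormedModule) f l1 -> is_series (V:=C_NormedModule) f l2 -> l1 = l2.
Proof. unfold is_series. apply filterlim_locally_unique. Qed.

Lemma is_series_Cminus (f g : nat -> C) (l1 l2 : C) :
  is_series (V:=C_NormedModule) f l1 -> is_series (V:=C_NormedModule) g l2 ->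
  is_series (V:=C_NormedModule) (fun n => Cminus (f n) (g n)) (Cminus l1 l2).
Proof. intros H1 H2. exact (is_series_minus _ _ _ _ H1 H2). Qed.

Lemma L2 q k (L : C) : Cmod q < 1 -> q <> RtoC 0 ->
  is_series (V := C_NormedModule) (fun j => term1 q k (S j)) L ->
  is_series (V := C_NormedModule) (fun j => term1 q (- k - 1) (S j)) (Copp (Cplus (RtoC 1) L)).
Proof.
  intros Hq1 Hq0 H. destruct (Z_le_dec 0 k) as [Hk|Hk].
  - replace k with (Z.of_nat (Z.to_nat k)) in * by lia. now apply L2nat.
  - set (k' := Z.to_nat (- k - 1)).
    destruct (L1 q (Z.of_nat k') Hq1) as [L' HL']. change C in L'.
    pose proof (L2nat q k' L' Hq0 HL') as H'.
    replace (- Z.of_nat k' - 1)%Z with k in H' by (unfold k'; lia).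
    pose proof (ser_unique _ _ _ H H') as E. rewrite E.
    replace (- k - 1)%Z with (Z.of_nat k') by (unfold k'; lia).
    match goal with |- is_series _ ?l => replace l with L' end. exact HL'.
    ceq.
Qed.

Theorem lemma2 (q : C) (hq0 : 0 < Cmod q) (hq1 : Cmod q < 1) :
  (forall n : nat, (1 <= n)%nat ->
     sum_n_m (G := C_AbelianMonoid) (term1 q (Z.of_nat n)) 1 (2 * n) = RtoC 0)
  /\
  (forall (n : Z) (r : nat),
     exists l : C,
       is_series (V := C_NormedModule) (fun j : nat => inner q n r (S j)) l /\
       is_series (V := C_NormedModule) (fun j : nat => inner q (- n)%Z r (S j)) l).
Proof.
  assert (Hq : q <> RtoC 0).
  { intro H. rewrite H, Cmod_0 in hq0. lra. }
  split.
  - intros n Hn. apply part1'. exact Hq.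
  - intros n r.
    destruct (L1 q (n + Z.of_nat r) hq1) as [A HA]. change C in A.
    destruct (L1 q (- n + Z.of_nat r) hq1) as [B HB]. change C in B.
    pose proof (L2 q _ A hq1 Hq HA) as HA'.
    pose proof (L2 q _ B hq1 Hq HB) as HB'.
    exists (Cminus A (Copp (Cplus (RtoC 1) B))). split.
    + apply (is_series_ext (fun j => Cminus (term1 q (n + Z.of_nat r) (S j)) (term1 q (- (- n + Z.of_nat r) - 1) (S j)))).
      * intros j. rewrite innerE by auto. f_equal. f_equal. lia.
      * now apply is_series_Cminus.
    + apply (is_series_ext (fun j => Cminus (term1 q (- n + Z.of_nat r) (S j)) (term1 q (- (n + Z.of_nat r) - 1) (S j)))).
      * intros j. rewrite innerE by auto. f_equal. f_equal. lia.
      * match goal with |- is_series _ ?l => replace l with (Cminus B (Copp (Cplus (RtoC 1) A))) end.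
        now apply is_series_Cminus. ceq.
Qed.
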